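(* Every $F_2$-free split graph is hereditarily connected-domishold.
   Context: A graph is split if its vertex set can be partitioned into a clique and an independent set. $F_2$ is the graph obtained from $K_4$ on $\{a,b,c,d\}$ by adding a new vertex adjacent exactly to $a$ and $b$ and another new vertex adjacent exactly to $c$ and $d$. A connected dominating set of a connected graph $G$ is a set $S\subseteq V(G)$ such that every vertex outside $S$ has a neighbor in $S$ and $G[S]$ is connected; $G$ is connected-domishold if there exist $w:V(G)\to\mathbb{R}_{\ge0}$, $t\in\mathbb{R}_{\ge0}$ with $\sum_{x\in S}w(x)\ge t$ iff $S$ is a connected dominating set, for all $S$; disconnected graphs are connected-domishold by convention. $G$ is hereditarily connected-domishold if every induced subgraph is connected-domishold. *)

(* Defs.v *)
From mathcomp Require Import all_boot.
From Stdlib Require Import Reals.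
Set Implicit Arguments. Unset Strict Implicit. Unset Printing Implicit Defensive.

(* A finite simple graph: vertex type T : finType, adjacency e : rel T,
   assumed symmetric and irreflexive (hypotheses in the theorem). *)

Section Graphs.
Variable T : finType.
Variable e : rel T.

Definition is_clique (K : {set T}) : Prop :=
  forall x y, x \in K -> y \in K -> x != y -> e x y.
Definition is_independent (I : {set T}) : Prop :=
  forall x y, x \in I -> y \in I -> ~~ e x y.
Definition split_graph : Prop :=
  exists K I : {set T}, [/\ K :|: I = setT, K :&: I = set0,
                            is_clique K & is_independent I].

(* adjacency of F_2: K_4 on {0,1,2,3}, vertex 4 adjacent exactly to 0,1,
   vertex 5 adjacent exactly to 2,3. *)
Definition F2_edge (i j : 'I_6) : bool :=
  let a := nat_of_ord i in let b := nat_of_ord j in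
  [|| (a != b) && (a < 4) && (b < 4)
    , (a == 4) && (b < 2), (b == 4) && (a < 2)
    , (a == 5) && (2 <= b < 4) | (b == 5) && (2 <= a < 4)].

Definition F2_free : Prop :=
  ~ exists f : 'I_6 -> T, injective f /\ forall i j, e (f i) (f j) = F2_edge i j.

(* the induced subgraph G[S] is connected (vacuous for S empty) *)
Definition connected_in (S : {set T}) : Prop :=
  forall x y, x \in S -> y \in S ->
    connect [rel u v | [&& e u v, u \in S & v \in S]] x y.

Definition cds_in (A S : {set T}) : Prop :=
  [/\ S \subset A,
      (forall v, v \in A -> v \notin S -> exists2 u, u \in S & e v u)
    & connected_in S].

(* G[A] is connected-domishold (disconnected graphs are by convention) *)
Definition connected_domishold_in (A : {set T}) : Prop :=
  ~ connected_in A \/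
  exists (w : T -> R) (t : R),
    (forall x, (0 <= w x)%R) /\ (0 <= t)%R /\
    forall S : {set T}, S \subset A ->
      ((t <= \big[Rplus/0%R]_(x in S) w x)%R <-> cds_in A S).

Definition hereditarily_connected_domishold : Prop :=
  forall A : {set T}, connected_domishold_in A.

End Graphs.

(* Main.v *)
Require Import Defs.
From mathcomp Require Import all_boot.
From Stdlib Require Import Reals.
From mathcomp Require Import all_boot zify.
Set Implicit Arguments. Unset Strict Implicit. Unset Printing Implicit Defensive.

Section Comb.
Variable T : finType.
Implicit Types (A B N M P Q X : {set T}) (F : {set {set T}}).

Definition sp1 F := forall N M, N \in F -> M \in F -> #|N :\: M| <= 1 \/ #|M :\: N| <= 1.
Definition antichain F := forall P Q, P \in F -> Q \in F -> P \subset Q -> P = Q.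

Lemma two_in A a b : a \in A -> b \in A -> a != b -> 1 < #|A|.
Proof. by move=> aA bA ab; apply/card_gt1P; exists a, b. Qed.

Lemma diff_ne0 F P Q : antichain F -> P \in F -> Q \in F -> P != Q -> P :\: Q != set0.
Proof.
move=> ac PF QF PQ; apply/negP=> /eqP h; move/eqP: PQ; apply.
by apply: ac => //; rewrite -setD_eq0 h.
Qed.

Lemma diff1 F P Q : antichain F -> sp1 F -> P \in F -> Q \in F -> 1 < #|P :\: Q| ->
  exists q, Q :\: P = [set q].
Proof.
move=> ac sp PF QF h.
have QP : Q != P by apply/negP=> /eqP e; move: h; rewrite e setDv cards0.
have ne := diff_ne0 ac QF PF QP.
have : #|Q :\: P| == 1.
  rewrite -card_gt0 in ne; rewrite eqn_leq ne andbT.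
  case: (sp P Q PF QF) => // h2; by move: h; rewrite ltnNge h2.
by move/cards1P.
Qed.

Lemma card_le1 A q : A \subset [set q] -> A != set0 -> #|A| = 1.
Proof.
move=> s ne; apply/eqP; rewrite eqn_leq; apply/andP; split.
  by rewrite -(cards1 q); apply: subset_leq_card.
by rewrite card_gt0.
Qed.

Variables (F : {set {set T}}) (N M : {set T}) (z : T).
Hypotheses (ac : antichain F) (sp : sp1 F) (NF : N \in F) (MF : M \in F)
  (NM : N :\: M = [set z])
  (mx : forall A B, A \in F -> B \in F -> #|A :\: B| = 1 -> #|B :\: A| <= #|M :\: N|).

Lemma zN : z \in N.
Proof. have : z \in N :\: M by rewrite NM set11. by rewrite inE => /andP[]. Qed.
Lemma zM : z \notin M.
Proof. have : z \in N :\: M by rewrite NM set11. by rewrite inE => /andP[]. Qed.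
Lemma NsubM c : c \in N -> c != z -> c \in M.
Proof.
move=> cN cz; apply/negPn/negP=> cM.
have : c \in N :\: M by rewrite inE cM cN.
by rewrite NM inE (negbTE cz).
Qed.

Lemma claim1 Q : Q \in F -> z \notin Q -> N :\ z \subset Q.
Proof.
move=> QF zQ; apply/subsetP=> c; rewrite !inE => /andP[cz cN].
apply/negPn/negP=> cQ.
have h2 : 1 < #|N :\: Q|.
  apply: (@two_in _ z c); rewrite ?inE ?zN ?cN ?cQ ?zQ //; by rewrite eq_sym.
have [q Hq] := diff1 ac sp NF QF h2.
have cM := NsubM cN cz.
have QMs : Q :\: M \subset [set q].
  apply/subsetP=> y /setDP[yQ yM]; rewrite -Hq; apply/setDP; split=> //.
  apply/negP=> yN; have yz : y != z by apply/negP=> /eqP e; move: zQ; rewrite -e yQ.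
  by move: yM; rewrite (NsubM yN yz).
have QM : Q != M by apply/negP=> /eqP e; move: cQ; rewrite e cM.
have QMne := diff_ne0 ac QF MF QM.
have c1 := card_le1 QMs QMne.
have qM : q \notin M.
  have [y yin] := set0Pn _ QMne; have := subsetP QMs _ yin; rewrite inE => /eqP e.
  by move: yin; rewrite e inE => /andP[].
have hk := mx QF MF c1.
have sub : c |: (M :\: N) \subset M :\: Q.
  apply/subsetP=> y; rewrite !inE => /orP[/eqP->|/andP[yN yM]]; first by rewrite cQ cM.
  rewrite yM andbT; apply/negP=> yQ.
  have : y \in Q :\: N by rewrite inE yN yQ.
  by rewrite Hq inE => /eqP e; move: qM; rewrite -e yM.
have c'N : c \notin M :\: N by rewrite inE cN.
have := subset_leq_card sub; rewrite cardsU1 c'N add1n => h3.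
by move: hk; rewrite leqNgt (leq_trans _ h3).
Qed.

Lemma claim2 P : P \in F -> z \in P -> P :\ z \subset M.
Proof.
move=> PF zP; apply/subsetP=> p'; rewrite !inE => /andP[pz pP].
apply/negPn/negP=> pM.
have h2 : 1 < #|P :\: M|.
  by apply: (@two_in _ z p'); rewrite ?inE ?zM ?zP ?pM ?pP // eq_sym.
have [p Hp] := diff1 ac sp PF MF h2.
have pin : p \in M :\: P by rewrite Hp set11.
move: (pin); rewrite inE => /andP[pP' pMM].
case pN: (p \in N).
- have NP : N :\: P = [set p].
    apply/eqP; rewrite eqEsubset; apply/andP; split; last by rewrite sub1set inE pN pP'.
    apply/subsetP=> y /setDP[yN yP].
    have yz : y != z by apply/negP=> /eqP e; move: yP; rewrite e zP.
    by rewrite -Hp inE yP (NsubM yN yz).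
  have hk : #|P :\: N| <= #|M :\: N| by apply: mx => //; rewrite NP cards1.
  have sub : p' |: (M :\: N) \subset P :\: N.
    apply/subsetP=> y; rewrite !inE => /orP[/eqP->|/andP[yN yM]].
      rewrite pP andbT; apply/negP=> pN'. by move: pM; rewrite (NsubM pN' pz).
    rewrite yN /=; apply/negPn/negP=> yP.
    have : y \in M :\: P by rewrite inE yP yM.
    by rewrite Hp inE => /eqP e; move: yN; rewrite e pN.
  have p'N : p' \notin M :\: N by rewrite inE (negbTE pM) andbF.
  have := subset_leq_card sub; rewrite cardsU1 p'N add1n => h3. by move: hk; rewrite leqNgt (leq_trans _ h3).
- have NP : N \subset P.
    apply/subsetP=> y yN; case: (eqVneq y z) => [->//|yz].
    apply/negPn/negP=> yP.
    have : y \in M :\: P by rewrite inE yP (NsubM yN yz).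
    by rewrite Hp inE => /eqP e; move: yN; rewrite e pN.
  have e := ac NF PF NP. subst P.
  by move: pM; rewrite (NsubM pP pz).
Qed.

Lemma structure P Q : P \in F -> Q \in F -> z \in P -> z \notin Q -> P :\ z \subset Q.
Proof.
move=> PF QF zP zQ; apply/subsetP=> x; rewrite !inE => /andP[xz xP].
apply/negPn/negP=> xQ.
have h2 : 1 < #|P :\: Q|.
  by apply: (@two_in _ z x); rewrite ?inE ?zQ ?zP ?xQ ?xP // eq_sym.
have [y Hy] := diff1 ac sp PF QF h2.
have c1 := claim1 QF zQ. have c2 := claim2 PF zP.
case: (eqVneq N P) => [eNP|NP].
  by move/negP: xQ; apply; apply: (subsetP c1); rewrite eNP !inE xz.
have [n nin] := set0Pn _ (diff_ne0 ac NF PF NP).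
move: nin; rewrite inE => /andP[nP nN].
have nz : n != z by apply/negP=> /eqP e; move: nP; rewrite e zP.
have nQ : n \in Q by apply: (subsetP c1); exact/setD1P.
have ny : n = y.
  have : n \in Q :\: P by rewrite inE nQ nP.
  by rewrite Hy inE => /eqP.
have QM : Q \subset M.
  apply/subsetP=> q qQ; case qP: (q \in P).
    apply: (subsetP c2); apply/setD1P; split=> //.
    by apply/eqP=> e; move: zQ; rewrite -e qQ.
  have : q \in Q :\: P by rewrite inE qQ qP.
  rewrite Hy inE => /eqP ->; rewrite -ny; exact: NsubM nN nz.
have e := ac QF MF QM. subst Q.
by move/negP: xQ; apply; apply: (subsetP c2); exact/setD1P.
Qed.

End Comb.

Section Thr.
Variable T : finType.
Implicit Types (A B N M P Q X V U W : {set T}) (F G : {set {set T}}).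

Definition hit F X : bool := [forall N in F, X :&: N != set0].

Lemma hitP F X : reflect (forall N, N \in F -> X :&: N != set0) (hit F X).
Proof. exact: forall_inP. Qed.

Lemma meetP X N : reflect (exists2 x, x \in X & x \in N) (X :&: N != set0).
Proof.
apply: (iffP (set0Pn _)) => [[x]|[x xX xN]]; first by rewrite inE => /andP[]; exists x.
by exists x; rewrite inE xX xN.
Qed.

Definition TH V F := exists w : T -> nat, exists t : nat,
  (forall x, x \notin V -> w x = 0) /\ forall X, hit F X = (t <= \sum_(x in X) w x).

Definition Fm F := [set A | minset [pred B | B \in F] A].

Lemma Fm_sub F : Fm F \subset F.
Proof. by apply/subsetP=> A; rewrite inE => /minsetp. Qed.

Lemma Fm_anti F : antichain (Fm F).
Proof.
move=> P Q; rewrite !inE => mP mQ PQ; apply: (minsetinf mQ) => //.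
exact: minsetp mP.
Qed.

Lemma Fm_ex F N : N \in F -> exists2 M, M \in Fm F & M \subset N.
Proof.
move=> NF; have [M mM MN] := minset_exists (P := [pred B | B \in F]) NF.
by exists M; rewrite ?inE.
Qed.

Lemma hit_Fm F X : hit (Fm F) X = hit F X.
Proof.
apply/hitP/hitP=> h N NF.
  have [M MF MN] := Fm_ex NF; have /meetP[x xX xM] := h M MF.
  by apply/meetP; exists x => //; apply: (subsetP MN).
by apply: h; apply: (subsetP (Fm_sub F)).
Qed.

Lemma sum0 X : \sum_(x in X) (0 : nat) = 0.
Proof. by rewrite big1. Qed.

Lemma sum_ind X z c : \sum_(x in X) ((x == z) * c) = (z \in X) * c.
Proof.
case zX: (z \in X).
  rewrite (bigD1 z) //= eqxx mul1n big1 ?addn0 // => x /andP[_ /negbTE ->].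
  by rewrite mul0n.
rewrite big1 // => x xX; case: eqP => [e|//]; by move: zX; rewrite -e xX.
Qed.

Lemma sum_in X U c : \sum_(x in X) ((x \in U) * c) = #|X :&: U| * c.
Proof.
rewrite -big_distrl /=; congr (_ * _).
rewrite -sum1_card big_mkcond [RHS]big_mkcond /=.
apply: eq_bigr=> x _; rewrite inE; by case: (x \in X); case: (x \in U).
Qed.

Lemma sum_le_all X (f : T -> nat) : \sum_(x in X) f x <= \sum_x f x.
Proof.
rewrite big_mkcond /=; apply: leq_sum => x _; by case: (x \in X).
Qed.

Section Construct.
Variables (V : {set T}) (G : {set {set T}}) (z : T) (N0 : {set T}).
Hypotheses (N0G : N0 \in G) (zN0 : z \in N0) (subV : forall N, N \in G -> N \subset V)
  (spG : sp1 G)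
  (Hs : forall P Q, P \in G -> Q \in G -> z \in P -> z \notin Q -> P :\ z \subset Q)
  (IH : forall V' F', #|V'| < #|V| -> (forall N, N \in F' -> N \subset V') -> sp1 F' -> TH V' F').

Let A := [set P :\ z | P in [set P in G | z \in P]].
Let U := \bigcup_(P in [set P in G | z \in P]) (P :\ z).
Let B := [set Q :\: U | Q in [set Q in G | z \notin Q]].
Let W := (V :\: U) :\ z.

Lemma zV : z \in V. Proof. exact: (subsetP (subV N0G)). Qed.

Lemma ltV (Y : {set T}) : Y \subset V :\ z -> #|Y| < #|V|.
Proof.
move=> s; have := subset_leq_card s; rewrite [#|V|](cardsD1 z) zV /=. lia.
Qed.

Lemma UV : U \subset V :\ z.
Proof.
apply/bigcupsP=> P; rewrite inE => /andP[PG _].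
apply/subsetP=> x /setD1P[xz xP]; apply/setD1P; split=> //; exact: (subsetP (subV PG)).
Qed.

Lemma WV : W \subset V :\ z.
Proof. by apply/subsetP=> x /setD1P[xz /setDP[xV _]]; apply/setD1P. Qed.

Lemma subA a : a \in A -> a \subset U.
Proof. by case/imsetP=> P PG ->; rewrite /U; apply: (bigcup_sup _ PG). Qed.

Lemma subB b : b \in B -> b \subset W.
Proof.
case/imsetP=> Q; rewrite inE => /andP[QG zQ] ->.
apply/subsetP=> x /setDP[xQ xU]; apply/setD1P; split.
  by apply/eqP=> e; move: zQ; rewrite -e xQ.
by apply/setDP; split=> //; apply: (subsetP (subV QG)).
Qed.

Lemma spA : sp1 A.
Proof.
move=> a a' /imsetP[P PG ->] /imsetP[P' P'G ->].
move: PG P'G; rewrite !inE => /andP[PG _] /andP[P'G _].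
have le : forall R S : {set T}, #|(R :\ z) :\: (S :\ z)| <= #|R :\: S|.
  move=> R S; apply: subset_leq_card; apply/subsetP=> x.
  rewrite !inE; case: (x == z); by rewrite //= ?andbF.
case: (spG PG P'G) => h; [left|right]; exact: leq_trans (le _ _) h.
Qed.

Lemma spB : sp1 B.
Proof.
move=> a a' /imsetP[P PG ->] /imsetP[P' P'G ->].
move: PG P'G; rewrite !inE => /andP[PG _] /andP[P'G _].
have le : forall R S : {set T}, #|(R :\: U) :\: (S :\: U)| <= #|R :\: S|.
  move=> R S; apply: subset_leq_card; apply/subsetP=> x.
  rewrite !inE; case: (x \in U); by rewrite //= ?andbF.
case: (spG PG P'G) => h; [left|right]; exact: leq_trans (le _ _) h.
Qed.

Lemma N0A : N0 :\ z \in A.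
Proof. by apply/imsetP; exists N0; rewrite // inE N0G zN0. Qed.

Lemma F1 X : z \notin X -> hit G X = hit A X.
Proof.
move=> zX; apply/hitP/hitP=> h.
  move=> a /imsetP[P]; rewrite inE => /andP[PG zP] ->.
  have /meetP[x xX xP] := h P PG; apply/meetP; exists x => //; apply/setD1P; split=> //.
  by apply/eqP=> e; move: zX; rewrite -e xX.
move=> P PG; case zP: (z \in P).
  have /meetP[x xX xP] : X :&: (P :\ z) != set0.
    by apply: h; apply/imsetP; exists P; rewrite // inE PG zP.
  by apply/meetP; exists x => //; move: xP => /setD1P[].
have /meetP[x xX xP] := h _ N0A.
apply/meetP; exists x => //; apply: (subsetP (Hs N0G PG zN0 _)) => //.
by rewrite zP.
Qed.

Lemma F2 X : z \in X -> hit G X = (X :&: U != set0) || hit B X.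
Proof.
move=> zX; apply/hitP/idP=> h.
  case: (boolP (X :&: U != set0)) => //= XU.
  apply/hitP=> b /imsetP[Q]; rewrite inE => /andP[QG zQ] ->.
  have /meetP[x xX xQ] := h Q QG; apply/meetP; exists x => //; apply/setDP; split=> //.
  apply/negP=> xU; move: XU; rewrite negbK => /eqP e.
  have : x \in X :&: U by rewrite inE xX xU.
  by rewrite e inE.
move=> P PG; case zP: (z \in P); first by apply/meetP; exists z.
case/orP: h => [/meetP[u uX /bigcupP[P' ]]|/hitP h].
  rewrite inE => /andP[P'G zP'] uP'.
  by apply/meetP; exists u => //; apply: (subsetP (Hs P'G PG zP' _)) => //; rewrite zP.
have /meetP[x xX xP] : X :&: (P :\: U) != set0.
  by apply: h; apply/imsetP; exists P; rewrite // inE PG zP.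
by apply/meetP; exists x => //; move: xP => /setDP[].
Qed.

Lemma construct : TH V G.
Proof.
have [wA [tA [hA0 hA]]] := IH (ltV UV) subA spA.
have [wg [tg [hg0 hg]]] := IH (ltV WV) subB spB.
have tA1 : 0 < tA.
  have := hA set0; rewrite big_set0.
  have -> : hit A set0 = false.
    apply/negP=> /hitP h; have := h _ N0A; by rewrite set0I eqxx.
  by rewrite lt0n => h; apply/negP=> /eqP e; move: h; rewrite e.
set sW := \sum_x wg x.
set Mb := tg * #|U| + sW + tg + 1.
set t := Mb * tA.
exists (fun x => (x == z) * (t - tg) + Mb * wA x + (x \in U) * tg + wg x), t.
split.
  move=> x xV.
  have xz : x != z by apply/negP=> /eqP e; move: xV; rewrite e zV.
  have xU : x \notin U by apply/negP=> xU; move: xV; have := subsetP UV _ xU; rewrite inE => /andP[_ ->].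
  have xW : x \notin W by apply/negP=> xW; move: xV; have := subsetP WV _ xW; rewrite inE => /andP[_ ->].
  by rewrite (negbTE xz) (negbTE xU) hA0 // hg0 // muln0.
move=> X.
rewrite !big_split /= sum_ind -big_distrr /= sum_in.
set SA := \sum_(x in X) wA x.
set SG := \sum_(x in X) wg x.
set c := #|X :&: U|.
have cU : c <= #|U| by apply: subset_leq_card; apply: subsetIr.
have SGW : SG <= sW by apply: sum_le_all.
have ctg : c * tg <= #|U| * tg by rewrite leq_mul2r cU orbT.
have tge : tg < t.
  rewrite /t; apply: (@leq_trans Mb); first by rewrite /Mb; lia.
  by rewrite leq_pmulr.
case zX: (z \in X).
- rewrite F2 // hg /= mul1n.
  case: (eqVneq (X :&: U) set0) => [XU|XU] /=.
    have SA0 : SA = 0.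
      rewrite /SA big1 // => x xX; apply: hA0; apply/negP=> xU.
      have : x \in X :&: U by rewrite inE xX xU.
      by rewrite XU inE.
    have c0 : c = 0 by rewrite /c XU cards0.
    rewrite SA0 c0 muln0 mul0n !addn0. apply/idP/idP; lia.
  have c1 : 0 < c by rewrite /c card_gt0.
  have : tg <= c * tg by rewrite leq_pmull.
  move=> h; apply/esym; apply/idP. lia.
- rewrite F1 ?zX // hA /= mul0n add0n.
  case: (leqP tA SA) => h.
    have : t <= Mb * SA by rewrite /t leq_mul2l h orbT.
    move=> h2; apply/esym/idP; lia.
  have h2 : Mb * SA.+1 <= t by rewrite /t leq_mul2l h orbT.
  apply/esym/negP => h3.
  move: h2; rewrite mulnS => h2. rewrite /Mb in h2 h3 ctg. lia.
Qed.

End Construct.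
End Thr.

Section Thr2.
Variable T : finType.
Implicit Types (A B N M P Q X V U W : {set T}) (F G : {set {set T}}).

Lemma step V F :
  (forall V' F', #|V'| < #|V| -> (forall N, N \in F' -> N \subset V') -> sp1 F' -> TH V' F') ->
  (forall N, N \in F -> N \subset V) -> sp1 F -> TH V F.
Proof.
move=> IH subV spF.
case: (eqVneq F set0) => [->|Fne].
  exists (fun _ => 0), 0; split=> // X.
  by apply/hitP=> N; rewrite inE.
case: (boolP (set0 \in F)) => [F0|F0].
  exists (fun _ => 0), 1; split=> // X.
  rewrite sum0; apply/hitP=> h; have := h _ F0; by rewrite setI0 eqxx.
set G := Fm F.
have GF := Fm_sub F.
have acG : antichain G := @Fm_anti _ F.
have spG : sp1 G by move=> N M NG MG; apply: spF; apply: (subsetP GF).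
have subG : forall N, N \in G -> N \subset V by move=> N NG; apply: subV; apply: (subsetP GF).
suff : TH V G.
  by case=> w [t [h0 h]]; exists w, t; split=> // X; rewrite -h hit_Fm.
have [N1 N1F] := set0Pn _ Fne.
have [N0 N0G _] := Fm_ex N1F.
have G0 : forall N, N \in G -> N != set0.
  by move=> N NG; apply/negP=> /eqP e; move: F0; rewrite -e (subsetP GF).
suff [z [N [NG zN Hs]]] : exists z N, [/\ N \in G, z \in N &
   forall P Q, P \in G -> Q \in G -> z \in P -> z \notin Q -> P :\ z \subset Q].
  exact: (construct NG zN subG spG Hs IH).
case: (boolP [exists p : {set T} * {set T},
  [&& p.1 \in G, p.2 \in G & #|p.1 :\: p.2| == 1]]).
- case/existsP=> p0 Pp0.
  case: (@arg_maxnP _ p0 (fun p : {set T} * {set T} =>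
    [&& p.1 \in G, p.2 \in G & #|p.1 :\: p.2| == 1]) (fun p => #|p.2 :\: p.1|) Pp0) => [[N M]] /=.
  case/and3P=> NG MG /cards1P[z Hz] mx.
  have mx' : forall A B, A \in G -> B \in G -> #|A :\: B| = 1 -> #|B :\: A| <= #|M :\: N|.
    by move=> A B AG BG AB; apply: (mx (A, B)); rewrite /= AG BG AB.
  exists z, N; split=> //.
    have : z \in N :\: M by rewrite Hz set11.
    by rewrite inE => /andP[].
  exact: structure acG spG NG MG Hz mx'.
- move=> nex.
  have [z zN0] := set0Pn _ (G0 _ N0G).
  exists z, N0; split=> // P Q PG QG zP zQ.
  have PQ : P != Q by apply/negP=> /eqP e; move: zQ; rewrite -e zP.
  have QP : Q != P by rewrite eq_sym.
  have h1 := diff_ne0 acG PG QG PQ; have h2 := diff_ne0 acG QG PG QP.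
  rewrite -card_gt0 in h1; rewrite -card_gt0 in h2.
  exfalso; move/negP: nex; apply.
  case: (spG P Q PG QG) => h.
    by apply/existsP; exists (P, Q); rewrite /= PG QG eqn_leq h.
  by apply/existsP; exists (Q, P); rewrite /= PG QG eqn_leq h.
Qed.

Lemma thr V F : (forall N, N \in F -> N \subset V) -> sp1 F -> TH V F.
Proof.
move: {2}#|V| (leqnn #|V|) => n; elim: n V F => [|n IHn] V F hV.
  apply: step => V' F' h; by move: (leq_trans h hV).
apply: step => V' F' h; apply: IHn; by rewrite -ltnS (leq_trans h hV).
Qed.

End Thr2.

Section Graph.
Variable T : finType.
Variable e : rel T.
Hypotheses (e_sym : symmetric e) (e_irr : irreflexive e).

Lemma conn_step (S : {set T}) x u : connected_in e S -> x \in S -> u \in S -> x != u ->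
  exists2 v, v \in S & e x v.
Proof.
move=> cS xS uS xu; have /connectP[p pth pl] := cS x u xS uS.
case: p pth pl => [_ /= ux|v p /= /andP[/and3P[exv _ vS] _] _].
  by move: xu; rewrite ux eqxx.
by exists v.
Qed.

Variables (A K I : {set T}).
Implicit Types (S : {set T}).
Hypotheses (A0 : A != set0) (KIA : K :|: I = A) (KI0 : K :&: I = set0)
  (cK : is_clique e K) (iI : is_independent e I)
  (PI : forall x, x \in I -> exists2 k, k \in K & ~~ e x k).

Definition Nb x := [set k in K | e x k].
Definition Fam := K |: [set Nb x | x in I].

Lemma inA x : (x \in A) = (x \in K) || (x \in I).
Proof. by rewrite -KIA inE. Qed.

Lemma KnI x : x \in K -> x \notin I.
Proof.
move=> xK; apply/negP=> xI; have : x \in K :&: I by rewrite inE xK xI.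
by rewrite KI0 inE.
Qed.

Lemma S_KI S x : S \subset A -> x \in S -> x \notin K -> x \in I.
Proof. by move=> SA xS xK; move: (subsetP SA _ xS); rewrite inA (negbTE xK). Qed.

Lemma cds_char S : S \subset A -> cds_in e A S <-> hit Fam S.
Proof.
move=> SA; split.
- case=> _ dom cS.
  have hK : S :&: K != set0.
    apply/negP=> /eqP SK.
    have nK : forall s, s \in S -> s \notin K.
      move=> s sS; apply/negP=> sK; have : s \in S :&: K by rewrite inE sS sK.
      by rewrite SK inE.
    case: (set0Pn _ A0) => a aA.
    case: (eqVneq S set0) => [S0|].
      have aS : a \notin S by rewrite S0 inE.
      by have [u] := dom a aA aS; rewrite S0 inE.
    case/set0Pn=> x xS.
    have xI := S_KI SA xS (nK _ xS).
    have [k kK nxk] := PI xI.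
    have kA : k \in A by rewrite inA kK.
    have kS : k \notin S by apply/negP=> kS; move: (nK _ kS); rewrite kK.
    have [u uS eku] := dom k kA kS.
    have uI := S_KI SA uS (nK _ uS).
    case: (eqVneq x u) => [xu|xu].
      by move: nxk; rewrite xu e_sym eku.
    have [v vS exv] := conn_step cS xS uS xu.
    have vI := S_KI SA vS (nK _ vS).
    by move: (iI xI vI); rewrite exv.
  apply/hitP=> N; case/setU1P => [->|/imsetP[x xI ->]].
    exact: hK.
  have xA : x \in A by rewrite inA xI orbT.
  have inN : forall u, u \in S -> e x u -> S :&: Nb x != set0.
    move=> u uS exu; case: (boolP (u \in K)) => uK.
      by apply/meetP; exists u => //; rewrite inE uK exu.
    by move: (iI xI (S_KI SA uS uK)); rewrite exu.
  case: (boolP (x \in S)) => xS.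
    case/set0Pn: hK => k0; rewrite inE => /andP[k0S k0K].
    have xk0 : x != k0 by apply/negP=> /eqP e0; move: (KnI k0K); rewrite -e0 xI.
    have [v vS exv] := conn_step cS xS k0S xk0.
    exact: inN vS exv.
  have [u uS exu] := dom x xA xS.
  exact: inN uS exu.
- move/hitP=> h.
  have /set0Pn[k0] : S :&: K != set0 by apply: h; rewrite !inE eqxx.
  rewrite inE => /andP[k0S k0K].
  have toK : forall x, x \in S -> x \in K -> connect [rel u v | [&& e u v, u \in S & v \in S]] x k0.
    move=> x xS xK; case: (eqVneq x k0) => [->|xk]; first exact: connect0.
    by apply: connect1; rewrite /= xS k0S !andbT; exact: (cK xK k0K xk).
  have toK' : forall x, x \in S -> connect [rel u v | [&& e u v, u \in S & v \in S]] x k0.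
    move=> x xS; case: (boolP (x \in K)) => xK; first exact: toK.
    have xI := S_KI SA xS xK.
    have /meetP[u uS] : S :&: Nb x != set0 by apply: h; rewrite !inE; apply/orP; right; apply/imsetP; exists x.
    rewrite inE => /andP[uK exu].
    apply: (connect_trans (y := u)); last exact: toK.
    by apply: connect1; rewrite /= exu xS uS.
  split=> //.
    move=> v vA vS; case: (boolP (v \in K)) => vK.
      exists k0 => //; apply: (cK vK k0K); apply/negP=> /eqP e0; move: vS; by rewrite e0 k0S.
    have vI : v \in I by move: vA; rewrite inA (negbTE vK).
    have /meetP[u uS] : S :&: Nb v != set0 by apply: h; rewrite !inE; apply/orP; right; apply/imsetP; exists v.
    by rewrite inE => /andP[_ evu]; exists u.
  move=> x y xS yS.
  apply: (connect_trans (toK' x xS)).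
  rewrite sym_connect_sym; first exact: toK'.
  by move=> u v /=; rewrite e_sym; case: (u \in S); case: (v \in S); rewrite ?andbF.
Qed.

Lemma Fam_sub N : N \in Fam -> N \subset K.
Proof.
case/setU1P => [->//|/imsetP[x _ ->]].
by apply/subsetP=> k; rewrite inE => /andP[].
Qed.

End Graph.

Section Graph2.
Variable T : finType.
Variable e : rel T.
Hypotheses (e_sym : symmetric e) (e_irr : irreflexive e).
Variables (A K I : {set T}).
Hypotheses (A0 : A != set0) (KIA : K :|: I = A) (KI0 : K :&: I = set0)
  (clK : is_clique e K) (iI : is_independent e I)
  (PI : forall x, x \in I -> exists2 k, k \in K & ~~ e x k).

Lemma mem_diff u p q : u \in Nb e K p :\: Nb e K q -> [/\ u \in K, e p u & ~~ e q u].
Proof. rewrite /Nb !inE; case: (u \in K) => //=; case: (e p u); case: (e q u) => //. Qed.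

Lemma Fam_sp : F2_free e -> sp1 (Fam e K I).
Proof.
move=> f2 N M NF MF.
have sK := Fam_sub (K:=K) (I:=I) (e:=e).
case/setU1P: NF => [->|/imsetP[x xI ->]].
  right; rewrite (_ : M :\: K = set0) ?cards0 //; apply/eqP; rewrite setD_eq0; exact: sK.
case/setU1P: MF => [->|/imsetP[y yI ->]].
  left; rewrite (_ : Nb e K x :\: K = set0) ?cards0 //; apply/eqP; rewrite setD_eq0; apply: sK.
  by apply/setU1P; right; apply/imsetP; exists x.
case: (leqP #|Nb e K x :\: Nb e K y| 1) => h1; first by left.
case: (leqP #|Nb e K y :\: Nb e K x| 1) => h2; first by right.
exfalso; apply: f2.
case/card_gt1P: h1 => a [b [/mem_diff[aK exa nya] /mem_diff[bK exb nyb] ab]].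
case/card_gt1P: h2 => c [d [/mem_diff[cK eyc nxc] /mem_diff[dK eyd nxd] cd]].
have KnI' := KnI KI0.
have D_ab : (a == b) = false by exact: negbTE ab.
have D_ac : (a == c) = false by apply/eqP=> h; move: nya; by rewrite h eyc.
have D_ad : (a == d) = false by apply/eqP=> h; move: nya; by rewrite h eyd.
have D_ax : (a == x) = false by apply/eqP=> h; move: (KnI' _ aK); by rewrite h xI.
have D_ay : (a == y) = false by apply/eqP=> h; move: (KnI' _ aK); by rewrite h yI.
have D_bc : (b == c) = false by apply/eqP=> h; move: nyb; by rewrite h eyc.
have D_bd : (b == d) = false by apply/eqP=> h; move: nyb; by rewrite h eyd.
have D_bx : (b == x) = false by apply/eqP=> h; move: (KnI' _ bK); by rewrite h xI.
have D_by : (b == y) = false by apply/eqP=> h; move: (KnI' _ bK); by rewrite h yI.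
have D_cd : (c == d) = false by exact: negbTE cd.
have D_cx : (c == x) = false by apply/eqP=> h; move: (KnI' _ cK); by rewrite h xI.
have D_cy : (c == y) = false by apply/eqP=> h; move: (KnI' _ cK); by rewrite h yI.
have D_dx : (d == x) = false by apply/eqP=> h; move: (KnI' _ dK); by rewrite h xI.
have D_dy : (d == y) = false by apply/eqP=> h; move: (KnI' _ dK); by rewrite h yI.
have D_xy : (x == y) = false by apply/eqP=> h; move: nya; by rewrite -h exa.
have E_ab : e a b = true by exact: (clK aK bK (negbT D_ab)).
have E_ac : e a c = true by exact: (clK aK cK (negbT D_ac)).
have E_ad : e a d = true by exact: (clK aK dK (negbT D_ad)).
have E_ax : e a x = true by by rewrite e_sym exa.
have E_ay : e a y = false by by rewrite e_sym (negbTE nya).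
have E_ba : e b a = true by exact: (clK bK aK (negbT (etrans (eq_sym _ _) D_ab))).
have E_bc : e b c = true by exact: (clK bK cK (negbT D_bc)).
have E_bd : e b d = true by exact: (clK bK dK (negbT D_bd)).
have E_bx : e b x = true by by rewrite e_sym exb.
have E_by : e b y = false by by rewrite e_sym (negbTE nyb).
have E_ca : e c a = true by exact: (clK cK aK (negbT (etrans (eq_sym _ _) D_ac))).
have E_cb : e c b = true by exact: (clK cK bK (negbT (etrans (eq_sym _ _) D_bc))).
have E_cd : e c d = true by exact: (clK cK dK (negbT D_cd)).
have E_cx : e c x = false by by rewrite e_sym (negbTE nxc).
have E_cy : e c y = true by by rewrite e_sym eyc.
have E_da : e d a = true by exact: (clK dK aK (negbT (etrans (eq_sym _ _) D_ad))).
have E_db : e d b = true by exact: (clK dK bK (negbT (etrans (eq_sym _ _) D_bd))).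
have E_dc : e d c = true by exact: (clK dK cK (negbT (etrans (eq_sym _ _) D_cd))).
have E_dx : e d x = false by by rewrite e_sym (negbTE nxd).
have E_dy : e d y = true by by rewrite e_sym eyd.
have E_xa : e x a = true by by rewrite exa.
have E_xb : e x b = true by by rewrite exb.
have E_xc : e x c = false by exact: negbTE nxc.
have E_xd : e x d = false by exact: negbTE nxd.
have E_xy : e x y = false by exact: negbTE (iI xI yI).
have E_ya : e y a = false by exact: negbTE nya.
have E_yb : e y b = false by exact: negbTE nyb.
have E_yc : e y c = true by by rewrite eyc.
have E_yd : e y d = true by by rewrite eyd.
have E_yx : e y x = false by exact: negbTE (iI yI xI).
exists (fun i : 'I_6 => nth x [:: a; b; c; d; x; y] i); split.
  move=> i j /eqP; rewrite nth_uniq ?size_tuple //=; last first.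
    by rewrite !inE D_ab D_ac D_ad D_ax D_ay D_bc D_bd D_bx D_by D_cd D_cx D_cy D_dx D_dy D_xy.
  by move/eqP=> h; apply: val_inj.
move=> [[|[|[|[|[|[|i]]]]]] Hi] [[|[|[|[|[|[|j]]]]]] Hj] //; rewrite /F2_edge /= ?e_irr //;
  by rewrite ?E_ab E_ac E_ad E_ax E_ay E_ba E_bc E_bd E_bx E_by E_ca E_cb E_cd E_cx E_cy E_da E_db E_dc E_dx E_dy E_xa E_xb E_xc E_xd E_xy E_ya E_yb E_yc E_yd E_yx.
Qed.
End Graph2.

Section Final.
Variable T : finType.
Variable e : rel T.
Hypotheses (e_sym : symmetric e) (e_irr : irreflexive e).

Lemma INR_sum (S : {set T}) (w : T -> nat) :
  \big[Rplus/IZR Z0]_(x in S) INR (w x) = INR (\sum_(x in S) w x).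
Proof. by rewrite (big_morph INR plus_INR (erefl (INR 0))). Qed.

Lemma weights (A K I : {set T}) :
  A != set0 -> K :|: I = A -> K :&: I = set0 -> is_clique e K -> is_independent e I ->
  (forall x, x \in I -> exists2 k, k \in K & ~~ e x k) -> F2_free e ->
  exists (w : T -> R) (t : R),
    (forall x, Rle (IZR Z0) (w x)) /\ Rle (IZR Z0) t /\
    forall S : {set T}, S \subset A ->
      (Rle t (\big[Rplus/IZR Z0]_(x in S) w x) <-> cds_in e A S).
Proof.
move=> A0 KIA KI0 cK iI PI f2.
have [wn [tn [_ hw]]] := thr (@Fam_sub _ e K I) (Fam_sp e_sym e_irr KI0 cK iI f2).
exists (fun x => INR (wn x)), (INR tn); split; first by move=> x; exact: pos_INR.
split; first exact: pos_INR.
move=> S SA; have hc := cds_char e_sym A0 KIA KI0 cK iI PI SA.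
rewrite INR_sum; split=> h.
  by apply/hc; rewrite hw; apply/leP; apply: INR_le.
by apply: le_INR; apply/leP; rewrite -hw; apply/hc.
Qed.

End Final.

Theorem mainTheorem12 (T : finType) (e : rel T)
  (e_sym : symmetric e) (e_irr : irreflexive e) :
  split_graph e -> F2_free e -> hereditarily_connected_domishold e.
Proof.
move=> [K [I [KIT KI0 cK iI]]] f2 A; right.
case: (eqVneq A set0) => [->|A0].
  exists (fun _ => IZR Z0), (IZR Z0); split; first by move=> _; apply: Rle_refl.
  split; first exact: Rle_refl.
  move=> S; rewrite subset0 => /eqP ->; rewrite big_set0; split=> _; last exact: Rle_refl.
  by split=> [|v|x y]; rewrite ?inE ?sub0set.
set K0 := K :&: A; set I0 := I :&: A.
have KIA0 : K0 :|: I0 = A by rewrite /K0 /I0 -setIUl KIT setTI.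
have KI00 : K0 :&: I0 = set0 by rewrite /K0 /I0 setIACA KI0 set0I.
have cK0 : is_clique e K0.
  by move=> x y; rewrite !inE => /andP[xK _] /andP[yK _]; apply: cK.
have iI0 : is_independent e I0.
  by move=> x y; rewrite !inE => /andP[xI _] /andP[yI _]; apply: iI.
case: (boolP [exists x in I0, [forall k in K0, e x k]]).
- case/exists_inP=> x xI0 /forall_inP hx.
  apply: (weights e_sym e_irr (K := x |: K0) (I := I0 :\ x)) => //.
  + by rewrite -setUA setUCA setD1K.
  + apply/eqP; rewrite -subset0; apply/subsetP=> v /setIP[/setU1P[vx|vK] /setD1P[nvx vI]].
      by rewrite vx eqxx in nvx.
    by rewrite -KI00 inE vK vI.
  + move=> u v /setU1P[->|uK] /setU1P[->|vK] uv.
    * by rewrite eqxx in uv.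
    * exact: hx.
    * by rewrite e_sym; apply: hx.
    * exact: cK0.
  + by move=> u v /setD1P[_ uI] /setD1P[_ vI]; apply: iI0.
  + move=> y /setD1P[_ yI]; exists x; first exact: setU11.
    exact: iI0.
- move=> nex.
  apply: (weights e_sym e_irr (K := K0) (I := I0)) => // y yI.
  case: (boolP [forall k in K0, e y k]) => h.
    by move/negP: nex; case; apply/exists_inP; exists y.
  by case/forall_inPn: h => k kK nyk; exists k.
Qed.
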